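(* Let $R$ be a commutative ring, $\vartheta$ any one of the four types (left, right, pre-two-sided, two-sided), and $\mathcal A$ an $R$-algebra which is integral over $R$ and in which every element is either invertible or nilpotent. Then $\mathcal A$ is a $\vartheta$-quasi-stable $R$-algebra.
   Context: Algebras are associative and unital. $\mathcal A$ is integral over $R$ if every element is a root of a monic polynomial with coefficients in $R$. An $R$-submodule $V$ of $\mathcal A$ is a left (resp. right) Mathieu subspace if whenever $a^m\in V$ for all $m\ge1$, then for every $b\in\mathcal A$, $ba^m\in V$ (resp. $a^mb\in V$) for all sufficiently large $m$; pre-two-sided if both left and right; two-sided if whenever $a^m\in V$ for all $m\ge1$, for all $b,c\in\mathcal A$, $ba^mc\in V$ for all sufficiently large $m$. $\mathcal A$ is $\vartheta$-quasi-stable if every $R$-submodule $V$ of $\mathcal A$ with $1\notin V$ is a $\vartheta$-Mathieu subspace of $\mathcal A$. *)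

(* Defs.v *)
From HB Require Import structures.
From mathcomp Require Import all_boot all_order all_algebra.
Set Implicit Arguments. Unset Strict Implicit. Unset Printing Implicit Defensive.
Import GRing.Theory.
Local Open Scope ring_scope.

Definition integral_elt (R : comNzRingType) (A : algType R) (a : A) : Prop :=
  exists p : {poly R}, p \is monic /\ \sum_(i < size p) p`_i *: a ^+ i = 0.

Definition integral_alg (R : comNzRingType) (A : algType R) : Prop :=
  forall a : A, integral_elt a.

Definition invertible (A : nzRingType) (a : A) : Prop :=
  exists b : A, a * b = 1 /\ b * a = 1.

Definition nilpotent (A : nzRingType) (a : A) : Prop :=
  exists n : nat, a ^+ n = 0.

Definition is_submodule (R : comNzRingType) (A : algType R) (V : A -> Prop) : Prop :=
  [/\ V 0, (forall x y, V x -> V y -> V (x + y)) & (forall (r : R) x, V x -> V (r *: x))].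

Inductive mtype := MLeft | MRight | MPreTwo | MTwo.

Definition left_mathieu (A : nzRingType) (V : A -> Prop) : Prop :=
  forall a : A, (forall m, (1 <= m)%N -> V (a ^+ m)) ->
    forall b : A, exists N, forall m, (N <= m)%N -> V (b * a ^+ m).

Definition right_mathieu (A : nzRingType) (V : A -> Prop) : Prop :=
  forall a : A, (forall m, (1 <= m)%N -> V (a ^+ m)) ->
    forall b : A, exists N, forall m, (N <= m)%N -> V (a ^+ m * b).

Definition twosided_mathieu (A : nzRingType) (V : A -> Prop) : Prop :=
  forall a : A, (forall m, (1 <= m)%N -> V (a ^+ m)) ->
    forall b c : A, exists N, forall m, (N <= m)%N -> V (b * a ^+ m * c).

Definition mathieu (t : mtype) (A : nzRingType) (V : A -> Prop) : Prop :=
  match t with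
  | MLeft => left_mathieu V
  | MRight => right_mathieu V
  | MPreTwo => left_mathieu V /\ right_mathieu V
  | MTwo => twosided_mathieu V
  end.

Definition quasi_stable (t : mtype) (R : comNzRingType) (A : algType R) : Prop :=
  forall V : A -> Prop, is_submodule V -> ~ V 1 -> mathieu t V.

(* Main.v *)
Require Import Defs.
From mathcomp Require Import all_boot all_order all_algebra.
Import GRing.Theory.
Local Open Scope ring_scope.

Lemma inv_case (R : comNzRingType) (A : algType R) (V : A -> Prop) (a b : A) :
  is_submodule V -> a * b = 1 -> b * a = 1 -> integral_elt b ->
  (forall m, (1 <= m)%N -> V (a ^+ m)) -> V 1.
Proof.
move=> [V0 VD VZ] ab ba [q [mq Hq]] Va.
have cab : GRing.comm a b by rewrite /GRing.comm ab ba.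
have pos : (0 < size q)%N by rewrite size_poly_gt0 monic_neq0.
set e := (size q).-1.
have sq : size q = e.+1 by rewrite /e prednK.
have Hpow : forall i, (i <= e)%N -> a ^+ e * b ^+ i = a ^+ (e - i).
  move=> i le; rewrite -{1}(subnK le) exprD -mulrA -exprMn_comm // ab expr1n mulr1 //.
have : a ^+ e * (\sum_(i < size q) q`_i *: b ^+ i) = 0 by rewrite Hq mulr0.
rewrite mulr_sumr.
have -> : \sum_(i < size q) a ^+ e * (q`_i *: b ^+ i)
        = \sum_(i < e.+1) a ^+ e * (q`_i *: b ^+ i).
  by rewrite sq.
rewrite big_ord_recr /= -scalerAr Hpow // subnn expr0.
have -> : q`_e = 1 by move/monicP: mq; rewrite /lead_coef sq.
rewrite scale1r => H.
have Vs : V (\sum_(i < e) a ^+ e * (q`_(widen_ord (leqnSn e) i) *: b ^+ i)).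
  apply: (big_ind V) => // i _.
  rewrite -scalerAr Hpow ?(ltnW (ltn_ord i)) //; apply: VZ; apply: Va.
  by rewrite subn_gt0.
have -> : (1 : A) = (-1) *: \sum_(i < e) a ^+ e * (q`_(widen_ord (leqnSn e) i) *: b ^+ i).
  by rewrite scaleN1r; apply/eqP; rewrite eq_sym eqr_oppLR -addr_eq0 H.
by apply: VZ.
Qed.

Theorem proposition7p4 (R : comNzRingType) (t : mtype) (A : algType R) :
  integral_alg A ->
  (forall a : A, invertible a \/ nilpotent a) ->
  quasi_stable t A.
Proof.
move=> Hint Hdich V HV HV1.
have key : forall a : A, (forall m, (1 <= m)%N -> V (a ^+ m)) ->
    exists N, forall m, (N <= m)%N -> a ^+ m = 0.
  move=> a Va; case: (Hdich a) => [[b [ab ba]]|[n Hn]].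
    exfalso; apply: HV1. exact: (@inv_case R A V a b HV ab ba (Hint b) Va).
  exists n => m le; by rewrite -(subnK le) exprD Hn mulr0.
have V0 : V 0 by case: HV.
case: t => /=.
- move=> a Va b; have [N HN] := key a Va; exists N => m le; by rewrite HN // mulr0.
- move=> a Va b; have [N HN] := key a Va; exists N => m le; by rewrite HN // mul0r.
- split.
  + move=> a Va b; have [N HN] := key a Va; exists N => m le; by rewrite HN // mulr0.
  + move=> a Va b; have [N HN] := key a Va; exists N => m le; by rewrite HN // mul0r.
- move=> a Va b c; have [N HN] := key a Va; exists N => m le; by rewrite HN // mulr0 mul0r.
Qed.
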